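(* A $po$-$\Gamma$-semigroup $M$ is regular if and only if for every fuzzy subset $f$ of $M$ we have $f\preceq (f\circ 1)\circ f$.
   Context: Let $M$ and $\Gamma$ be nonempty sets with a map $M\times\Gamma\times M\to M$, $(a,\gamma,b)\mapsto a\gamma b$, satisfying $(a\gamma b)\mu c=a\gamma(b\mu c)$ for all $a,b,c\in M$, $\gamma,\mu\in\Gamma$. A $po$-$\Gamma$-semigroup is such an $M$ with a partial order $\le$ such that $a\le b$ implies $a\gamma c\le b\gamma c$ and $c\gamma a\le c\gamma b$ for all $c\in M$, $\gamma\in\Gamma$. For $H\subseteq M$, $(H]=\{t\in M: t\le h \text{ for some } h\in H\}$; $a\Gamma M\Gamma a=\{a\gamma x\mu a: x\in M,\gamma,\mu\in\Gamma\}$. $M$ is regular if $a\in(a\Gamma M\Gamma a]$ for every $a\in M$. A fuzzy subset of $M$ is a map $M\to[0,1]$; $1$ is the constant fuzzy subset with value $1$. For $c\in M$ let $A_c=\{(y,z)\in M\times M: c\le y\gamma z \text{ for some }\gamma\in\Gamma\}$. $(f\circ g)(c)=\bigvee_{(y,z)\in A_c}\min\{f(y),g(z)\}$ if $A_c\ne\emptyset$, and $0$ otherwise. $f\preceq g$ means $f(c)\le g(c)$ for all $c\in M$. *)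

(* Defs.v *)
From HB Require Import structures.
From mathcomp Require Import all_boot all_order all_algebra.
From mathcomp Require Import all_classical all_reals.
From mathcomp Require Import Rstruct.
From Stdlib Require Import Rdefinitions.
Set Implicit Arguments. Unset Strict Implicit. Unset Printing Implicit Defensive.
Import Order.TTheory GRing.Theory Num.Theory.
Local Open Scope classical_set_scope.
Local Open Scope ring_scope.

Section Defs.
Variables (M G : Type) (op : M -> G -> M -> M) (le : M -> M -> Prop).

Definition po_Gamma_semigroup : Prop :=
  [/\ inhabited M, inhabited G,
      (forall (a b c : M) (g m : G), op (op a g b) m c = op a g (op b m c)),
      [/\ (forall a, le a a),
          (forall a b, le a b -> le b a -> a = b) &
          (forall a b c, le a b -> le b c -> le a c)] &
      (forall (a b c : M) (g : G), le a b -> le (op a g c) (op b g c) /\ le (op c g a) (op c g b))].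

Definition down (H : set M) : set M := [set t | exists2 h, H h & le t h].

Definition aGMGa (a : M) : set M := [set t | exists x g m, t = op (op a g x) m a].

Definition regular : Prop := forall a : M, down (aGMGa a) a.

Definition fuzzy (f : M -> R) : Prop := forall x, 0 <= f x <= 1.

Definition one_fz : M -> R := fun _ => 1.

Definition A_c (c : M) : set (M * M) := [set p | exists g, le c (op p.1 g p.2)].

Definition fcomp (f g : M -> R) : M -> R := fun c =>
  if `[< A_c c !=set0 >] then sup [set Num.min (f p.1) (g p.2) | p in A_c c] else 0.

Definition fle (f g : M -> R) : Prop := forall c, f c <= g c.
End Defs.

(* Main.v *)
Require Import Defs.
From mathcomp Require Import all_boot all_order all_algebra.
From mathcomp Require Import all_classical all_reals.
From mathcomp Require Import Rstruct.
From Stdlib Require Import Rdefinitions.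
Import Order.TTheory GRing.Theory Num.Theory.
Local Open Scope classical_set_scope.
Local Open Scope ring_scope.

Section Aux.
Variables (M G : Type) (op : M -> G -> M -> M) (le : M -> M -> Prop).

Lemma fcomp_le (f g : M -> R) c (b : R) : 0 <= b ->
  (forall p, A_c op le c p -> Num.min (f p.1) (g p.2) <= b) -> fcomp op le f g c <= b.
Proof.
move=> b0 H; rewrite /fcomp; case: asboolP => [ne|_]; last done.
apply: ge_sup.
  by case: ne => p Hp; exists (Num.min (f p.1) (g p.2)); exists p.
by move=> x [p Hp <-]; apply: H.
Qed.

Lemma fcomp_ge (f g : M -> R) c p : (forall x, f x <= 1) ->
  A_c op le c p -> Num.min (f p.1) (g p.2) <= fcomp op le f g c.
Proof.
move=> f1 Hp; rewrite /fcomp asboolT; last by exists p.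
apply: ub_le_sup; last by exists p.
exists 1 => x [q _ <-]; rewrite ge_min f1 //.
Qed.
End Aux.

Theorem theorem23 (M G : Type) (op : M -> G -> M -> M) (le : M -> M -> Prop) :
  po_Gamma_semigroup op le ->
  (regular op le <->
   (forall f : M -> R, fuzzy f ->
      fle f (fcomp op le (fcomp op le f (@one_fz M)) f))).
Proof.
case=> _ _ assoc [refl _ trans] mono; split.
- move=> reg f fz a.
  have f1 : forall x, f x <= 1 by move=> x; case/andP: (fz x).
  have c1 : forall x, fcomp op le f (@one_fz M) x <= 1.
    by move=> x; apply: fcomp_le => // p _; rewrite ge_min f1.
  case: (reg a) => t [x [g [m ->]]] Ha.
  apply: le_trans (@fcomp_ge _ _ op le _ _ _ (op a g x, a) c1 _); last by exists m.
  rewrite le_min lexx andbT.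
  apply: le_trans (@fcomp_ge _ _ op le _ _ _ (a, x) f1 _); last by exists g; apply: refl.
  by rewrite le_min lexx /one_fz /= f1.
- move=> H a; apply: contrapT => nreg.
  pose f : M -> R := fun x => if `[< le x a >] then 1 else 0.
  have fz : fuzzy f by move=> x; rewrite /f; case: ifP => _; rewrite ?lexx ?ler01.
  have f01 : forall x, f x = 0 \/ f x = 1 by move=> x; rewrite /f; case: ifP; auto.
  have := H f fz a.
  rewrite {1}/f asboolT; last exact: refl.
  apply/negP; rewrite -ltNge.
  apply: (@le_lt_trans _ _ 0); last exact: ltr01.
  apply: fcomp_le => // -[y z] [g /= Hyz].
  case: (f01 z) => [->|fz1]; first by rewrite ge_min lexx orbT.
  rewrite ge_min; apply/orP; left.
  apply: fcomp_le => // -[u v] [m /= Huv].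
  case: (f01 u) => [->|fu1]; first by rewrite ge_min lexx.
  exfalso; apply: nreg.
  have za : le z a by move: fz1; rewrite /f; case: asboolP => // _ /esym/eqP; rewrite oner_eq0.
  have ua : le u a by move: fu1; rewrite /f; case: asboolP => // _ /esym/eqP; rewrite oner_eq0.
  exists (op (op a m v) g a); first by exists v, m, g.
  apply: (trans _ _ _ Hyz).
  apply: (trans _ (op y g a) _ (proj2 (mono z a y g za))).
  apply: (trans _ (op (op a m v) g a) _ _ ); last exact: refl.
  apply: (trans _ (op (op u m v) g a) _ (proj1 (mono y (op u m v) a g Huv))).
  exact: (proj1 (mono (op u m v) (op a m v) a g (proj1 (mono u a v m ua)))).
Qed.
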